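(* Let $G$ be a nice graph of order $n$, size $m$ and maximum degree $\Delta$. Then ${\rm ME}^{\rm W}(G) \leq {\rm ML}^{\rm W}(G) \leq m \cdot {\rm ME}^{\rm W}(G)$, ${\rm MV}^{\rm W}(G) \leq {\rm ML}^{\rm W}(G) \leq \frac{n}{2}\cdot {\rm MV}^{\rm W}(G)$, and ${\rm ME}^{\rm W}(G) \leq {\rm MV}^{\rm W}(G) \leq \Delta \cdot {\rm ME}^{\rm W}(G)$.
   Context: All graphs are finite and simple. A walk of a graph $G$ is a sequence of vertices $u_0u_1\dots u_p$ with $u_tu_{t+1}\in E(G)$ for all $t$ (vertices and edges may repeat); its length is $p$. For a walk $W$ of $G$, $G+W$ is the multigraph on $V(G)$ whose edge multiset consists of $E(G)$ together with each edge $e$ added as many times as $W$ traverses $e$. A multigraph is locally irregular if no two adjacent vertices have the same degree; $W$ is irregularising if $G+W$ is locally irregular. A graph is nice if it is connected and not isomorphic to $K_2$. ${\rm ML}^{\rm W}(G)$ is the minimum length of an irregularising walk of $G$; ${\rm ME}^{\rm W}(G)$ is the minimum, over irregularising walks $W$ of $G$, of the maximum number of times $W$ traverses an edge; ${\rm MV}^{\rm W}(G)$ is the minimum, over irregularising walks $W$ of $G$, of the maximum over vertices $v$ of the number of edges of $W$ (counted with multiplicity) incident to $v$. *)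

(* Defs.v *)
From mathcomp Require Import all_boot.
Set Implicit Arguments. Unset Strict Implicit. Unset Printing Implicit Defensive.

Section Graphs.
Variable T : finType.

Definition simple_graph (e : rel T) : Prop := symmetric e /\ irreflexive e.

Definition connected_graph (e : rel T) : Prop :=
  0 < #|T| /\ forall x y : T, connect e x y.

Definition is_K2 (e : rel T) : Prop :=
  exists x y : T, [/\ x != y, e x y & forall z : T, z = x \/ z = y].

Definition nice (e : rel T) : Prop := connected_graph e /\ ~ is_K2 e.

Definition order_of : nat := #|T|.

(* size: number of edges, edges being 2-subsets {u,v} *)
Definition size_of (e : rel T) : nat :=
  #|[set [set u; v] | u in T, v in T & e u v]|.

Definition deg (e : rel T) (v : T) : nat := #|[set u | e v u]|.

Definition max_deg (e : rel T) : nat := \max_(v : T) deg e v.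

(* A walk u_0 u_1 ... u_p is represented by its start x0 and the sequence
   p = [:: u_1; ...; u_p] with path e x0 p; its length is size p. *)
Definition is_walk (e : rel T) (x0 : T) (p : seq T) : Prop := path e x0 p.

Definition walk_length (x0 : T) (p : seq T) : nat := size p.

Definition trav (x0 : T) (p : seq T) (u v : T) : nat :=
  count (fun ab : T * T => ((ab.1 == u) && (ab.2 == v)) || ((ab.1 == v) && (ab.2 == u)))
        (zip (x0 :: p) p).

Definition winc (e : rel T) (x0 : T) (p : seq T) (v : T) : nat :=
  \sum_(u | e v u) trav x0 p u v.

(* degree of v in the multigraph G + W *)
Definition degGW (e : rel T) (x0 : T) (p : seq T) (v : T) : nat :=
  \sum_(u | e v u) (1 + trav x0 p u v).

Definition locally_irregular_GW (e : rel T) (x0 : T) (p : seq T) : Prop :=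
  forall u v : T, e u v -> degGW e x0 p u != degGW e x0 p v.

Definition irregularising (e : rel T) (x0 : T) (p : seq T) : Prop :=
  is_walk e x0 p /\ locally_irregular_GW e x0 p.

Definition max_edge_trav (e : rel T) (x0 : T) (p : seq T) : nat :=
  \max_(u : T) \max_(v | e u v) trav x0 p u v.

Definition max_vertex_inc (e : rel T) (x0 : T) (p : seq T) : nat :=
  \max_(v : T) winc e x0 p v.

Definition is_min_irr (e : rel T) (f : T -> seq T -> nat) (k : nat) : Prop :=
  (exists x0 p, irregularising e x0 p /\ f x0 p = k) /\
  (forall x0 p, irregularising e x0 p -> k <= f x0 p).

Definition is_MLW (e : rel T) (k : nat) : Prop := is_min_irr e walk_length k.
Definition is_MEW (e : rel T) (k : nat) : Prop := is_min_irr e (max_edge_trav e) k.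
Definition is_MVW (e : rel T) (k : nat) : Prop := is_min_irr e (max_vertex_inc e) k.

End Graphs.

(* Main.v *)
Require Import Defs.
From mathcomp Require Import all_boot.

Section Help.
Variable T : finType.
Variable e : rel T.
Hypothesis esym : symmetric e.
Hypothesis eirr : irreflexive e.

Definition M (u v : T) (ab : T * T) : bool :=
  ((ab.1 == u) && (ab.2 == v)) || ((ab.1 == v) && (ab.2 == u)).

Lemma count_sum (A : Type) (P : pred A) (s : seq A) :
  count P s = \sum_(x <- s) P x.
Proof. by elim: s => [|x s IH]; rewrite ?big_nil ?big_cons //= IH. Qed.

Lemma travE (x0 : T) p u v : trav x0 p u v = \sum_(x <- zip (x0 :: p) p) M u v x.
Proof. by rewrite /trav count_sum. Qed.

Lemma trav_sym (x0 : T) p u v : trav x0 p u v = trav x0 p v u.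
Proof. rewrite !travE; apply: eq_bigr => x _; by rewrite /M orbC. Qed.

Lemma size_s (x0 : T) p : size (zip (x0 :: p) p) = size p.
Proof. by rewrite size_zip /= (minn_idPr (leqnSn _)). Qed.

Lemma path_all (x0 : T) p : path e x0 p -> all (fun ab : T * T => e ab.1 ab.2) (zip (x0 :: p) p).
Proof. by elim: p x0 => [|y p IH] x0 //= /andP [-> /IH]. Qed.

Lemma le_sum_term (I : finType) (P : pred I) (F : I -> nat) i :
  P i -> F i <= \sum_(j | P j) F j.
Proof. by move=> Pi; rewrite (bigD1 i) //= leq_addr. Qed.
Arguments le_sum_term {I P F} i.

Lemma trav_le_size (x0 : T) p u v : trav x0 p u v <= size p.
Proof. by rewrite /trav -(size_s x0) count_size. Qed.

Lemma trav_le_max (x0 : T) p u v : e u v -> trav x0 p u v <= max_edge_trav e x0 p.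
Proof.
move=> euv; rewrite /max_edge_trav.
apply: leq_trans (leq_bigmax_cond _ euv) _.

exact: leq_bigmax.
Qed.

Lemma inner_le1 (v : T) (x : T * T) : \sum_(u | e v u) M u v x <= 1.
Proof.
case: x => a b.
set w := if (a, b).1 == v then (a,b).2 else (a,b).1.
rewrite big_mkcond /=.
apply: (@leq_trans (\sum_(u : T) (u == w))).
  apply: leq_sum => u _.
  case evu: (e v u) => //.
  have uv : u != v by apply/eqP => E; move: evu; rewrite E eirr.
  rewrite /M /w /=.
  have [-> | av] := eqVneq a v.
    by rewrite [v == u]eq_sym (negbTE uv) /= eq_sym.
  by rewrite /= orbF [u == a]eq_sym; case: eqP; case: eqP.
clearbody w. rewrite (bigD1 w) //= eqxx big1 // => u /negbTE -> //.
Qed.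

Lemma winc_le_size (x0 : T) p v : winc e x0 p v <= size p.
Proof.
rewrite /winc.
under eq_bigr => u _ do rewrite travE.
rewrite exchange_big /= -(size_s x0) -sum1_size.
by apply: leq_sum => x _; apply: inner_le1.
Qed.


Lemma two_le (x : T * T) : e x.1 x.2 -> 2 <= \sum_(v : T) \sum_(u | e v u) M u v x.
Proof.
case: x => a b /= eab.
have ab : a != b by apply/eqP => E; move: eab; rewrite E eirr.
rewrite (bigD1 b) //= [X in _ + X](bigD1 a) //=.
have h1 : 1 <= \sum_(u | e b u) M u b (a, b).
  apply: leq_trans (le_sum_term (F := fun u => M u b (a, b)) a _); last by rewrite esym.
  by rewrite /M /= !eqxx.
have h2 : 1 <= \sum_(u | e a u) M u a (a, b).
  apply: leq_trans (le_sum_term (F := fun u => M u a (a, b)) b eab).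
  by rewrite /M /= !eqxx orbT.
rewrite addnA -[2]/(1 + 1); apply: leq_trans (leq_addr _ _).
exact: leq_add.
Qed.

Lemma sum_winc (x0 : T) p : path e x0 p -> 2 * size p <= \sum_(v : T) winc e x0 p v.
Proof.
move=> /path_all hall.
rewrite /winc.
under eq_bigr => v _ do under eq_bigr => u _ do rewrite travE.
under eq_bigr => v _ do rewrite exchange_big /=.
rewrite exchange_big /= -(size_s x0) -sum1_size big_distrr /= big_seq [X in _ <= X]big_seq.
apply: leq_sum => x xs; rewrite muln1.
apply: two_le.
exact: (allP hall).
Qed.

Lemma max_edge_le_vertex (x0 : T) p : max_edge_trav e x0 p <= max_vertex_inc e x0 p.
Proof.
apply/bigmax_leqP => u _; apply/bigmax_leqP => v euv.
apply: (@leq_trans (winc e x0 p v)); last exact: leq_bigmax.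
rewrite /winc.
apply: (le_sum_term (F := fun w => trav x0 p w v) u).
by rewrite esym.
Qed.

Lemma winc_le_deg (x0 : T) p v : winc e x0 p v <= max_deg e * max_edge_trav e x0 p.
Proof.
rewrite /winc.
apply: (@leq_trans (\sum_(u | e v u) max_edge_trav e x0 p)).
  apply: leq_sum => u evu; rewrite trav_sym; exact: trav_le_max.
rewrite sum_nat_const leq_mul2r; apply/orP; right.
apply: (@leq_trans (deg e v)); last exact: leq_bigmax.
by rewrite /deg cardsE.
Qed.

Lemma set2_eq (a b u v : T) : u != v -> [set a; b] == [set u; v] -> M u v (a, b).
Proof.
move=> uv /eqP E.
have ha : a \in [set u; v] by rewrite -E !inE eqxx.
have hb : b \in [set u; v] by rewrite -E !inE eqxx orbT.
have hu : u \in [set a; b] by rewrite E !inE eqxx.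
have hv : v \in [set a; b] by rewrite E !inE eqxx orbT.
move: ha hb hu hv; rewrite !inE /M /=.
case/orP=> /eqP -> ; case/orP=> /eqP -> //=; rewrite ?eqxx ?orbT //.
  by rewrite orbb => _ /eqP vu; move: uv; rewrite vu eqxx.
by rewrite orbb => /eqP uv'; move: uv; rewrite uv' eqxx.
Qed.

Lemma size_le_edges (x0 : T) p : path e x0 p -> size p <= size_of e * max_edge_trav e x0 p.
Proof.
move=> /path_all hall.
set S := [set [set u; v] | u in T, v in T & e u v].
set s := zip (x0 :: p) p.
have -> : size p = \sum_(E in S) \sum_(x <- s) ([set x.1; x.2] == E).
  rewrite exchange_big /= -(size_s x0) -sum1_size big_seq [X in _ = X]big_seq.
  apply: eq_bigr => x xs.
  have xS : [set x.1; x.2] \in S.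
    by apply/imset2P; exists x.1 x.2 => //; rewrite inE; exact: (allP hall).
  by rewrite (bigD1 [set x.1; x.2]) //= eqxx big1 // => E /andP [_ /negbTE]; rewrite eq_sym => ->.
rewrite /size_of -/S -sum_nat_const.
apply: leq_sum => E /imset2P [u v _]; rewrite inE => euv ->.
have uv : u != v by apply/eqP => E'; move: euv; rewrite E' eirr.
apply: (@leq_trans (trav x0 p u v)); last exact: trav_le_max.
rewrite travE; apply: leq_sum => [[a b]] _.
case h: ([set (a, b).1; (a, b).2] == [set u; v]) => //.
by rewrite set2_eq.
Qed.

End Help.

Theorem mainTheorem1 (T : finType) (e : rel T) (ML ME MV : nat) :
  simple_graph e -> nice e ->
  is_MLW e ML -> is_MEW e ME -> is_MVW e MV ->
  (ME <= ML /\ ML <= size_of e * ME) /\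
  (MV <= ML /\ 2 * ML <= order_of T * MV) /\
  (ME <= MV /\ MV <= max_deg e * ME).
Proof.
move=> [esym eirr] _ [[xL [pL [irL <-]]] minL] [[xE [pE [irE <-]]] minE]
  [[xV [pV [irV <-]]] minV].
have wL := irL.1; have wE := irE.1; have wV := irV.1.
split; [split|split; [split|split]].
- apply: leq_trans (minE _ _ irL) _.
  apply/bigmax_leqP => u _; apply/bigmax_leqP => v _; exact: trav_le_size.
- apply: leq_trans (minL _ _ irE) _.
  exact: size_le_edges.
- apply: leq_trans (minV _ _ irL) _.
  apply/bigmax_leqP => v _; exact: winc_le_size.
- apply: (@leq_trans (2 * size pV)); first by rewrite leq_mul2l (minL _ _ irV) orbT.
apply: (@leq_trans (\sum_(v : T) winc e xV pV v)); first exact: sum_winc.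
  apply: (@leq_trans (\sum_(v : T) max_vertex_inc e xV pV)).
    by apply: leq_sum => v _; exact: leq_bigmax.
  by rewrite sum_nat_const /order_of cardT.
- apply: leq_trans (minE _ _ irV) _.
  exact: max_edge_le_vertex.
- apply: leq_trans (minV _ _ irE) _.
  apply/bigmax_leqP => v _; exact: winc_le_deg.
Qed.
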